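(* Let $A\in\mathbb{R}^{m\times m}$ be symmetric, $B\in\mathbb{R}^{m\times k}$ with $k\le m$, and consider the quadratic problem on the Stiefel manifold $$\min_{W\in\mathbb{R}^{m\times k},\ W^TW=I_k} f(W),\qquad f(W)=\operatorname{Tr}(W^TAW-2W^TB).$$ Run the generalized power iteration method (GPI) described below. Then the algorithm decreases the value of $f$ monotonically in each iteration until it converges; that is, if $W$ is the current iterate and $\tilde{W}$ is the updated iterate, then $f(\tilde{W})\le f(W)$.
   Context: The generalized power iteration method (GPI) for this problem is: (1) Choose a constant $\alpha$ such that $\tilde{A}=\alpha I_m-A$ is positive definite, and choose an (arbitrary, e.g. random) initial $W\in\mathbb{R}^{m\times k}$ with $W^TW=I_k$. (2) Set $M\leftarrow 2\tilde{A}W+2B\in\mathbb{R}^{m\times k}$. (3) Compute a compact singular value decomposition $M=USV^T$ with $U\in\mathbb{R}^{m\times k}$ having orthonormal columns, $S\in\mathbb{R}^{k\times k}$ diagonal with nonnegative entries, and $V\in\mathbb{R}^{k\times k}$ orthogonal. (4) Update $W\leftarrow UV^T$. (5) Repeat steps (2)–(4) until convergence. $I_k$ denotes the $k\times k$ identity matrix and $\operatorname{Tr}$ the trace. *)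

(* Defs.v *)
From mathcomp Require Import all_boot all_order all_algebra.
From mathcomp Require Import all_reals.
Set Implicit Arguments. Unset Strict Implicit. Unset Printing Implicit Defensive.
Import Order.TTheory GRing.Theory Num.Theory.
Local Open Scope ring_scope.

Definition stiefel_obj {R : realType} {m k : nat}
  (A : 'M[R]_m) (B : 'M[R]_(m, k)) (W : 'M[R]_(m, k)) : R :=
  \tr (W^T *m A *m W - 2%:R *: (W^T *m B)).

Definition posdef {R : realType} {m : nat} (P : 'M[R]_m) : Prop :=
  P^T = P /\ forall x : 'cV[R]_m, x != 0 -> 0 < (x^T *m P *m x) 0 0.

(* Main.v *)
Require Import Defs.
From mathcomp Require Import all_boot all_order all_algebra.
From mathcomp Require Import all_reals.
From mathcomp Require Import lra.
Import Order.TTheory GRing.Theory Num.Theory.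
Local Open Scope ring_scope.

Lemma trmxB' (R : realType) (m k : nat) (X Y : 'M[R]_(m, k)) :
  (X - Y)^T = X^T - Y^T.
Proof. by apply/matrixP => a b; rewrite !mxE. Qed.

Lemma mxtraceB' (R : realType) (n : nat) (X Y : 'M[R]_n) :
  \tr (X - Y) = \tr X - \tr Y.
Proof. by rewrite /mxtrace -sumrB; apply: eq_bigr => i _; rewrite !mxE. Qed.

Lemma psd_tr (R : realType) (m k : nat) (P : 'M[R]_m) (D : 'M[R]_(m, k)) :
  posdef P -> 0 <= \tr (D^T *m P *m D).
Proof.
move=> [_ hP]; rewrite /mxtrace; apply: sumr_ge0 => i _.
have -> : (D^T *m P *m D) i i = ((col i D)^T *m P *m col i D) 0 0.
  rewrite !mxE; apply: eq_bigr => j _; rewrite !mxE; congr (_ * _).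
  by apply: eq_bigr => l _; rewrite !mxE.
have [->|nz] := eqVneq (col i D) 0.
  by rewrite mulmx0 mxE.
exact/ltW/hP.
Qed.

Lemma diag_le1 (R : realType) (m k : nat) (Z U : 'M[R]_(m, k)) (i : 'I_k) :
  Z^T *m Z = 1%:M -> U^T *m U = 1%:M -> (Z^T *m U) i i <= 1.
Proof.
move=> hZ hU.
have h0 : 0 <= ((Z - U)^T *m (Z - U)) i i.
  rewrite mxE; apply: sumr_ge0 => r _; rewrite !mxE; by rewrite -expr2 sqr_ge0.
have e1 : (U^T *m Z) i i = (Z^T *m U) i i.
  by rewrite -[U^T *m Z]trmxK trmx_mul trmxK mxE.
move: h0; rewrite trmxB' mulmxBl !mulmxBr hZ hU !mxE eqxx /=.
move: e1; rewrite !mxE => e1; rewrite e1; lra.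
Qed.

Lemma tr_diag (R : realType) (k : nat) (N S : 'M[R]_k) :
  is_diag_mx S -> \tr (N *m S) = \sum_i N i i * S i i.
Proof.
move=> /is_diag_mxP hS; rewrite /mxtrace; apply: eq_bigr => i _.
rewrite mxE (bigD1 i) //= big1 ?addr0 // => j hj.
by rewrite hS ?mulr0 // eq_sym.
Qed.

Lemma fE_gen (R : realType) (m k : nat) (A : 'M[R]_m) (B : 'M[R]_(m, k))
  (P : 'M[R]_m) (alpha : R) (X W M : 'M[R]_(m, k)) :
  A = alpha%:M - P -> X^T *m X = 1%:M ->
  2%:R *: (P *m W) + 2%:R *: B = M ->
  stiefel_obj A B X = alpha * \tr (1%:M : 'M[R]_k) - \tr (X^T *m P *m X)
       - (\tr (X^T *m M) - 2 * \tr (X^T *m P *m W)).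
Proof.
move=> eA hX hM; rewrite /stiefel_obj eA -hM.
rewrite mulmxBr mul_mx_scalar mulmxBl -scalemxAl hX.
rewrite [X^T *m (_ + _)]mulmxDr -!scalemxAr !mxtraceB' !mxtraceD !mxtraceZ !mulmxA.
lra.
Qed.

Theorem theorem2 (R : realType) (m k : nat)
  (A : 'M[R]_m) (B : 'M[R]_(m, k)) (alpha : R) (W : 'M[R]_(m, k))
  (U : 'M[R]_(m, k)) (S : 'M[R]_k) (V : 'M[R]_k) :
  (k <= m)%N ->
  A^T = A ->
  posdef (alpha%:M - A) ->
  W^T *m W = 1%:M ->
  U^T *m U = 1%:M ->
  is_diag_mx S ->
  (forall i : 'I_k, 0 <= S i i) ->
  V^T *m V = 1%:M -> V *m V^T = 1%:M ->
  2%:R *: ((alpha%:M - A) *m W) + 2%:R *: B = U *m S *m V^T ->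
  stiefel_obj A B (U *m V^T) <= stiefel_obj A B W.
Proof.
move=> _ _ hPd hW hU hS hS0 hVV hVV' hM.
set P := alpha%:M - A in hPd hM.
have PT : P^T = P by case: hPd.
have eA : A = alpha%:M - P by rewrite /P subKr.
set Y := U *m V^T.
set M := U *m S *m V^T in hM.
have hY : Y^T *m Y = 1%:M.
  by rewrite /Y trmx_mul trmxK mulmxA -(mulmxA V) hU mulmx1 hVV'.
have fE := fun X hX => @fE_gen R m k A B P alpha X W M eA hX hM.
have trYM : \tr (Y^T *m M) = \tr S.
  rewrite /Y /M trmx_mul trmxK !mulmxA -(mulmxA V) hU mulmx1.
  by rewrite mxtrace_mulC !mulmxA hVV mul1mx.
have trWM : \tr (W^T *m M) <= \tr S.
  rewrite /M !mulmxA mxtrace_mulC !mulmxA tr_diag // /mxtrace.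
  apply: ler_sum => i _.
  have := @diag_le1 R m k (W *m V) U i.
  rewrite trmx_mul -!mulmxA (mulmxA W^T) hW mul1mx hVV => /(_ erefl hU) h.
  by rewrite -[leRHS]mul1r ler_wpM2r.
have hD := @psd_tr R m k P (Y - W) hPd.
have cc : \tr (W^T *m P *m Y) = \tr (Y^T *m P *m W).
  by rewrite -mxtrace_tr !trmx_mul PT !trmxK !mulmxA.
clearbody P Y.
move: hD; rewrite trmxB' !mulmxBl !mulmxBr !mxtraceB' cc => hD.
rewrite (fE _ hY) (fE _ hW) trYM.
lra.
Qed.
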